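(* Let $\rho:\{C,V\}^*\to\{C,V\}^*$ be the rhythmic syncope function. Then for every $i,j>0$ and every tier $\tau$ on $\{C,V\}$, the function $\rho$ is not $i,j$-input--output strictly local on tier $\tau$.
   Context: Strings: $\lambda$ is the empty string; $\rtimes$ is a left word-boundary symbol not in any alphabet considered. For $k\ge 0$ and a string $x$, $\mathrm{suff}^k(x)$ is the string consisting of the last $k$ symbols of $\rtimes^k x$. The longest common prefix of a set of strings $A$ is denoted $\mathrm{lcp}(A)$. Rhythmic syncope: every $x\in\{C,V\}^*$ can be written uniquely as $c_0Vc_1Vc_2\cdots Vc_n$ with $c_0,\dots,c_n\in C^*$; then $\rho(c_0Vc_1V\cdots Vc_n)=c_0v_1c_1v_2c_2\cdots v_nc_n$, where $v_m=V$ if $m$ is even and $v_m=\lambda$ if $m$ is odd. For $f:\Sigma^*\to\Gamma^*$ ($\Sigma,\Gamma$ finite alphabets), $f^{\gets}(x):=\mathrm{lcp}(\{f(xy)\mid y\in\Sigma^*\})$, and for $x\in\Sigma^*$ the translation $f^{\to}_x:\Sigma^*\to\Gamma^*$ is defined by $f(xy)=f^{\gets}(x)f^{\to}_x(y)$. A tier on an alphabet $A$ is a homomorphism $\tau:A^*\to A^*$ such that for each $a\in A$, either $\tau(a)=a$ or $\tau(a)=\lambda$. Given $i,j>0$ and a tier $\tau$ on $\Sigma\cup\Gamma$, $f$ is $i,j$-input--output strictly local on tier $\tau$ ($i,j$-TIOSL) if for all $w,x\in\Sigma^*$: whenever $\mathrm{suff}^{i-1}(\tau(w))=\mathrm{suff}^{i-1}(\tau(x))$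 and $\mathrm{suff}^{j-1}(\tau(f^{\gets}(w)))=\mathrm{suff}^{j-1}(\tau(f^{\gets}(x)))$, we have $f^{\to}_w=f^{\to}_x$. *)

(* Defs.v *)
From Stdlib Require Import List Arith ClassicalEpsilon.
Import ListNotations.

Inductive sym : Type := C | V.

(* suff^k(x): the last k symbols of (rtimes^k x); the boundary symbol rtimes
   is represented by None, ordinary symbols by Some a. *)
Definition suff {A : Type} (k : nat) (x : list A) : list (option A) :=
  skipn (length x) (repeat None k ++ map Some x).

Definition is_prefix {A : Type} (p s : list A) : Prop := exists r, s = p ++ r.

Definition is_lcp {A : Type} (S : list A -> Prop) (p : list A) : Prop :=
  (forall s, S s -> is_prefix p s) /\
  (forall q, (forall s, S s -> is_prefix q s) -> length q <= length p).

(* lcp(S), chosen by (classical) description; it is unique when S is nonempty. *)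
Definition lcp {A : Type} (S : list A -> Prop) : list A :=
  epsilon (inhabits (@nil A)) (is_lcp S).

Definition f_left {S G : Type} (f : list S -> list G) (x : list S) : list G :=
  lcp (fun z => exists y, z = f (x ++ y)).

(* f^{->}_x, determined by f(xy) = f^{<-}(x) f^{->}_x(y) *)
Definition f_right {S G : Type} (f : list S -> list G) (x : list S) : list S -> list G :=
  fun y => skipn (length (f_left f x)) (f (x ++ y)).

Definition is_tier {A : Type} (tau : list A -> list A) : Prop :=
  (forall u v, tau (u ++ v) = tau u ++ tau v) /\
  (forall a : A, tau [a] = [a] \/ tau [a] = []).

Definition TIOSL {A : Type} (i j : nat) (tau : list A -> list A)
    (f : list A -> list A) : Prop :=
  forall w x : list A,
    suff (i - 1) (tau w) = suff (i - 1) (tau x) ->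
    suff (j - 1) (tau (f_left f w)) = suff (j - 1) (tau (f_left f x)) ->
    f_right f w = f_right f x.

(* Rhythmic syncope: delete the 1st, 3rd, 5th, ... occurrence of V.
   The flag b is true iff the next V is odd-numbered. *)
Fixpoint rho_aux (b : bool) (x : list sym) : list sym :=
  match x with
  | [] => []
  | C :: x' => C :: rho_aux b x'
  | V :: x' => if b then rho_aux false x' else V :: rho_aux true x'
  end.

Definition rho (x : list sym) : list sym := rho_aux true x.

(* Main.v *)
Require Import Defs.
From Stdlib Require Import List Arith Lia ClassicalEpsilon.
Import ListNotations.

Lemma skipn_repeat' {A} (a : A) d k : skipn d (repeat a (d + k)) = repeat a k.
Proof. induction d; simpl; auto. Qed.

Lemma suff_rep k n : k <= n -> suff k (repeat V n) = repeat (Some V) k.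
Proof.
  intros H. unfold suff. rewrite repeat_length, map_repeat, skipn_app.
  rewrite skipn_all2 by (rewrite repeat_length; lia). simpl.
  rewrite repeat_length. replace n with ((n - k) + k) at 2 by lia.
  apply skipn_repeat'.
Qed.

Lemma rho_even m y : rho (repeat V (2*m) ++ y) = repeat V m ++ rho y.
Proof.
  induction m; auto.
  replace (2 * S m) with (S (S (2*m))) by lia. unfold rho in *.
  change (repeat V (S (S (2*m))) ++ y) with (V :: V :: (repeat V (2*m) ++ y)).
  cbn [rho_aux]. now rewrite IHm.
Qed.

Lemma rho_odd m y : rho (repeat V (S (2*m)) ++ y) = repeat V m ++ rho_aux false y.
Proof.
  induction m; auto.
  replace (S (2 * S m)) with (S (S (S (2*m)))) by lia. unfold rho in *.
  change (repeat V (S (S (S (2*m)))) ++ y) with (V :: V :: (repeat V (S (2*m)) ++ y)).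
  cbn [rho_aux]. now rewrite IHm.
Qed.

Lemma prefix_eq {A} (p q s : list A) : is_prefix p s -> is_prefix q s ->
  length p = length q -> p = q.
Proof.
  intros [r1 H1] [r2 H2] L. subst s.
  assert (E := f_equal (firstn (length p)) H2).
  rewrite firstn_app, firstn_all, Nat.sub_diag, firstn_O, app_nil_r in E.
  rewrite L, firstn_app, firstn_all, Nat.sub_diag, firstn_O, app_nil_r in E.
  exact E.
Qed.

Lemma lcp_char {A} (S : list A -> Prop) p : S p -> (forall s, S s -> is_prefix p s) -> lcp S = p.
Proof.
  intros Hp Hall.
  assert (Hl : is_lcp S p).
  { split; auto. intros q Hq. destruct (Hq p Hp) as [r ->]. rewrite length_app. lia. }
  unfold lcp. destruct (epsilon_spec (inhabits (@nil A)) (is_lcp S) (ex_intro _ p Hl)) as [H1 H2].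
  set (e := epsilon _ _) in *.
  apply (prefix_eq e p p).
  - apply H1; exact Hp.
  - exists []. now rewrite app_nil_r.
  - destruct Hl as [_ H3]. specialize (H3 e H1). specialize (H2 p Hall). lia.
Qed.

Lemma fl_even m : f_left rho (repeat V (2*m)) = repeat V m.
Proof.
  unfold f_left. apply lcp_char.
  - exists []. rewrite rho_even. simpl. now rewrite app_nil_r.
  - intros s [y ->]. rewrite rho_even. now eexists.
Qed.

Lemma fl_odd m : f_left rho (repeat V (S (2*m))) = repeat V m.
Proof.
  unfold f_left. apply lcp_char.
  - exists []. rewrite rho_odd. simpl. now rewrite app_nil_r.
  - intros s [y ->]. rewrite rho_odd. now eexists.
Qed.

Lemma tau_nil (tau : list sym -> list sym) : is_tier tau -> tau [] = [].
Proof.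
  intros [H _]. specialize (H [] []). simpl in H.
  destruct (tau []); auto. apply (f_equal (@length _)) in H.
  simpl in H. rewrite length_app in H. simpl in H. lia.
Qed.

Lemma tau_rep tau n : is_tier tau ->
  tau (repeat V n) = repeat V n \/ tau (repeat V n) = [].
Proof.
  intros T. pose proof (tau_nil tau T) as T0. destruct T as [Hm Ha].
  destruct (Ha V) as [HV|HV]; [left|right]; induction n; simpl; auto;
  change (V :: repeat V n) with ([V] ++ repeat V n); rewrite Hm, HV, IHn; auto.
Qed.

Theorem proposition10 :
  forall (i j : nat) (tau : list sym -> list sym),
    0 < i -> 0 < j -> is_tier tau -> ~ TIOSL i j tau rho.
Proof.
  intros i j tau Hi Hj T H.
  specialize (H (repeat V (2*i)) (repeat V (S (2*i)))).
  assert (E : f_right rho (repeat V (2*i)) [V] = f_right rho (repeat V (S (2*i))) [V]).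
  { rewrite H; auto.
    - pose proof (tau_nil tau T) as T0. destruct T as [Hm Ha].
      destruct (Ha V) as [HV|HV].
      + assert (R1 : forall n, tau (repeat V n) = repeat V n).
        { intro n; induction n; simpl; auto;
          change (V :: repeat V n) with ([V] ++ repeat V n); rewrite Hm, HV, IHn; auto. }
        rewrite !R1, !suff_rep by lia; auto.
      + assert (R1 : forall n, tau (repeat V n) = []).
        { intro n; induction n; simpl; auto;
          change (V :: repeat V n) with ([V] ++ repeat V n); rewrite Hm, HV, IHn; auto. }
        rewrite !R1; auto.
    - now rewrite fl_even, fl_odd. }
  unfold f_right in E. rewrite fl_even, fl_odd in E.
  replace (repeat V (2*i) ++ [V]) with (repeat V (S (2*i)) ++ []) in E.
  2:{ replace (S (2*i)) with (2*i+1) by lia. now rewrite repeat_app, app_nil_r. }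
  replace (repeat V (S (2*i)) ++ [V]) with (repeat V (2*(S i)) ++ []) in E.
  2:{ replace (2 * S i) with (2*i+1+1) by lia. rewrite !repeat_app, app_nil_r.
      replace (2*i+1) with (S (2*i)) by lia. replace (S (2*i)) with (2*i+1) by lia.
      now rewrite repeat_app. }
  rewrite rho_odd, rho_even in E. simpl in E.
  apply (f_equal (@length _)) in E. rewrite !length_skipn in E. simpl in E.
  rewrite !length_app, !repeat_length in E. simpl in E. destruct i; lia.
Qed.
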